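(* Let $p$ be an odd prime and $\lambda=(\lambda_1,\dots,\lambda_r)$ a BG-partition, and let $k=k(\lambda)$. Then the partition $\mu=(\lambda_1,\lambda_2,\dots,\lambda_k)$ is $p$-regular.
   Context: For a partition $\lambda$ (weakly decreasing sequence of positive integers), $\lambda'$ is its conjugate and $\lambda$ is self-conjugate if $\lambda=\lambda'$. $k(\lambda)=\max\{i:\lambda_i\ge i\}$. The hook length at $(i,j)$ is $h_{ij}=\lambda_i+\lambda'_j-i-j+1$. A BG-partition is a self-conjugate partition with $p\nmid h_{ii}$ for all $1\le i\le k(\lambda)$. A partition is $p$-regular if no nonzero part appears $p$ or more times. *)

(* Defs.v *)
From mathcomp Require Import all_boot.
Set Implicit Arguments. Unset Strict Implicit. Unset Printing Implicit Defensive.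

(* Parts are 1-indexed: part s i = lambda_i = nth 0 s (i-1), and lambda_i = 0
   for i > size s (and by convention also for i = 0, which is never used). *)
Definition is_partition (s : seq nat) : bool :=
  sorted geq s && all (fun x => 0 < x) s.

Definition part (s : seq nat) (i : nat) : nat := nth 0 s i.-1.

Definition conj_part (s : seq nat) (j : nat) : nat := count (fun x => j <= x) s.

Definition conjugate (s : seq nat) : seq nat :=
  mkseq (fun j => conj_part s j.+1) (head 0 s).

Definition self_conjugate (s : seq nat) : bool := conjugate s == s.

(* k(lambda) = max { i >= 1 : lambda_i >= i } (0 if the set is empty;
   any such i satisfies i <= size s). *)
Definition kpart (s : seq nat) : nat :=
  \max_(i < size s | i.+1 <= part s i.+1) i.+1.

Definition hook (s : seq nat) (i j : nat) : nat :=
  part s i + conj_part s j + 1 - i - j.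

Definition BG_partition (p : nat) (s : seq nat) : Prop :=
  is_partition s /\ self_conjugate s /\
  forall i, 1 <= i <= kpart s -> ~~ (p %| hook s i i).

Definition p_regular (p : nat) (s : seq nat) : Prop :=
  forall x, 0 < x -> count_mem x s < p.

(* Main.v *)
Require Import Defs.
From mathcomp Require Import all_boot.
From mathcomp Require Import zify.

Lemma geq_trans : transitive geq.
Proof. by move=> a b c /= H1 H2; exact: leq_trans H2 H1. Qed.

Lemma lemB (x : nat) (s : seq nat) : all (fun z => z <= x) s -> sorted geq s ->
  forall m, m < count_mem x s -> nth 0 s m = x.
Proof.
elim: s => [|y s IH] //= /andP [Hy Hall] Hs m.
have Hs' : sorted geq s := path_sorted Hs.
have Hmin := order_path_min geq_trans Hs.
case: (eqVneq y x) => [-> | Hne].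
  case: m => [|m] //= Hm; apply: IH => //; lia.
have Hc : count_mem x s = 0.
  apply/count_memPn/negP => Hx.
  have := allP Hmin x Hx => /=; lia.
rewrite Hc /=. lia.
Qed.

Lemma lemA (x p : nat) (s : seq nat) : sorted geq s -> p <= count_mem x s ->
  exists a, a + p <= size s /\ forall m, m < p -> nth 0 s (a + m) = x.
Proof.
elim: s => [|y s IH] /= Hs Hc.
  exists 0; split; [lia | move=> m Hm; lia].
have Hs' : sorted geq s := path_sorted Hs.
have Hmin := order_path_min geq_trans Hs.
case: (leqP y x) => Hyx.
  exists 0; split.
    have := count_size (pred1 x) (y :: s) => /=; lia.
  move=> m Hm; rewrite add0n.
  have := @lemB x (y :: s) _ Hs m.
  rewrite /= => H; apply: H.
  - rewrite Hyx /=; apply/allP => z Hz; have := allP Hmin z Hz => /=; lia.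
  - rewrite /=; lia.
have Hne : (y == x) = false by apply/eqP; lia.
rewrite Hne /= in Hc.
have [a [Ha1 Ha2]] := IH Hs' Hc.
exists a.+1; split; first lia.
move=> m Hm; rewrite addSn /=; exact: Ha2.
Qed.

Lemma lemY (p L : nat) : odd p -> exists y, L <= y < L + p /\ p %| (2 * y).+1.
Proof.
move=> Hp.
have [h Hh] : exists h, p = h.*2.+1.
  exists p./2; rewrite -[LHS]odd_double_half Hp; lia.
have HL := divn_eq L p.
set q := L %/ p in HL; set r := L %% p in HL.
have Hr : r < p by rewrite /r ltn_mod; lia.
case: (leqP r h) => Hrh.
  exists (q * p + h); split; first lia.
  apply/dvdnP; exists (2 * q + 1); rewrite Hh; nia.
exists (q.+1 * p + h); split; first lia.
apply/dvdnP; exists (2 * q + 3); rewrite Hh; nia.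
Qed.

Lemma kpart_size s : kpart s <= size s.
Proof. by apply/bigmax_leqP => i _; exact: ltn_ord. Qed.

Lemma kpart_ge s : sorted geq s -> forall i, 1 <= i <= kpart s -> i <= part s i.
Proof.
move=> Hs i /andP [H1 H2].
have Hks := kpart_size s.
rewrite leqNgt; apply/negP => Hlt.
suff : kpart s <= i.-1 by lia.
apply/bigmax_leqP => j Pj.
rewrite leqNgt; apply/negP => Hj.
have Hjs : j < size s := ltn_ord j.
have := sorted_leq_nth geq_trans (@leqnn) 0 Hs.
move=> /(_ i.-1 j) /=.
rewrite !inE.
move=> H; have := H ltac:(lia) Hjs ltac:(lia).
rewrite /part /= in Pj Hlt. lia.
Qed.

Lemma selfconj_part s : self_conjugate s -> forall i, 1 <= i <= size s ->
  conj_part s i = part s i.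
Proof.
move=> /eqP Hc i Hi.
have Hsz : size s = head 0 s by rewrite -{1}Hc /conjugate size_mkseq.
rewrite /part -{2}Hc /conjugate nth_mkseq; last lia.
by rewrite prednK //; lia.
Qed.

Theorem lemma3p18 (p : nat) (lam : seq nat) :
  prime p -> odd p -> BG_partition p lam ->
  p_regular p (take (kpart lam) lam).
Proof.
move=> Hpr Hodd [/andP [Hsort Hpos] [Hsc Hhook]] x Hx.
set k := kpart lam.
have Hks : k <= size lam := kpart_size lam.
rewrite ltnNge; apply/negP => Hc.
have [a [Ha1 Ha2]] := @lemA x p _ (take_sorted k Hsort) Hc.
rewrite size_take in Ha1.
have Hak : a + p <= k by move: Ha1; case: ifP; lia.
have Hp1 : 0 < p := prime_gt0 Hpr.
have Hval : forall m, m < p -> part lam (a + m).+1 = x.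
  move=> m Hm; rewrite /part /= -(Ha2 m Hm) nth_take //; lia.
have Hxge : a + p <= x.
  have := @kpart_ge lam Hsort (a + p) ltac:(lia).
  have -> : a + p = (a + p.-1).+1 by lia.
  rewrite Hval; lia.
have [y [Hy1 Hy2]] := @lemY p (x - a - p) Hodd.
set n := x - 1 - y.
have Hm : n - a < p by lia.
have Hn : a + (n - a) = n by lia.
have := Hhook n.+1 ltac:(lia).
rewrite /hook selfconj_part //; last lia.
have := Hval (n - a) Hm; rewrite Hn => ->.
have -> : x + x + 1 - n.+1 - n.+1 = (2 * y).+1 by lia.
by rewrite Hy2.
Qed.
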